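(* Let $R$ be a ring, $n\in\{0,1,2,\dots\}\cup\{\infty\}$, and $\Upsilon:0\to A\xrightarrow{f}B\xrightarrow{g}C\to0$ a short exact sequence of left $R$-modules. The following are equivalent: (1) $\Upsilon$ is $n$-exact; (2) $0\to\mathrm{Hom}_R(P,A)\to\mathrm{Hom}_R(P,B)\to\mathrm{Hom}_R(P,C)\to0$ is exact for every $n$-projective module $P$. If moreover $R$ is commutative, these are also equivalent to: (3) $0\to\mathrm{Hom}_R(C,I)\to\mathrm{Hom}_R(B,I)\to\mathrm{Hom}_R(A,I)\to0$ is exact for every $n$-injective module $I$.
   Context: $R$ is an associative ring with identity; modules are left $R$-modules; $\infty+1=\infty$. For a positive integer $k$, $\mathcal{P}^{<k}$ is the class of modules $M$ admitting an exact sequence $0\to P_j\to\cdots\to P_0\to M\to 0$ with $j\le k-1$ and every $P_i$ finitely generated projective; $\mathcal{P}^{<\infty}$ is the class of modules admitting such a sequence for some finite $j$. A short exact sequence is $n$-exact if it stays exact under $\mathrm{Hom}_R(M,-)$ for all $M\in\mathcal{P}^{<n+1}$. A module $P$ is $n$-projective if $\mathrm{Hom}_R(P,-)$ preserves exactness of every $n$-exact sequence; $I$ is $n$-injective if $\mathrm{Hom}_R(-,I)$ preserves exactness of every $n$-exact sequence. *)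

(* Defs.v *)
From HB Require Import structures.
From mathcomp Require Import all_boot all_order all_algebra.
Set Implicit Arguments. Unset Strict Implicit. Unset Printing Implicit Defensive.
Import GRing.Theory.
Local Open Scope ring_scope.

Section Defs.
Variable R : pzRingType.

Definition short_exact (A B C : lmodType R) (f : {linear A -> B}) (g : {linear B -> C}) : Prop :=
  [/\ (forall a, f a = 0 -> a = 0),
      (forall a, g (f a) = 0),
      (forall b, g b = 0 -> exists a, f a = b)
    & (forall c, exists b, g b = c)].

Definition hom_cov_exact (M A B C : lmodType R) (f : {linear A -> B}) (g : {linear B -> C}) : Prop :=
  [/\ (forall h : {linear M -> A}, (forall x, f (h x) = 0) -> forall x, h x = 0),
      (forall h : {linear M -> A}, forall x, g (f (h x)) = 0),
      (forall h : {linear M -> B}, (forall x, g (h x) = 0) ->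
          exists h' : {linear M -> A}, forall x, f (h' x) = h x)
    & (forall h : {linear M -> C}, exists h' : {linear M -> B}, forall x, g (h' x) = h x)].

Definition hom_contra_exact (I A B C : lmodType R) (f : {linear A -> B}) (g : {linear B -> C}) : Prop :=
  [/\ (forall h : {linear C -> I}, (forall b, h (g b) = 0) -> forall c, h c = 0),
      (forall h : {linear C -> I}, forall a, h (g (f a)) = 0),
      (forall h : {linear B -> I}, (forall a, h (f a) = 0) ->
          exists h' : {linear C -> I}, forall b, h' (g b) = h b)
    & (forall h : {linear A -> I}, exists h' : {linear B -> I}, forall a, h' (f a) = h a)].

Definition finitely_generated (M : lmodType R) : Prop :=
  exists (k : nat) (v : 'I_k -> M), forall x : M,
    exists c : 'I_k -> R, x = \sum_(i < k) c i *: v i.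

Definition projective (P : lmodType R) : Prop :=
  forall (M N : lmodType R) (p : {linear M -> N}), (forall y, exists x, p x = y) ->
  forall h : {linear P -> N}, exists h' : {linear P -> M}, forall x, p (h' x) = h x.

Definition fg_projective (P : lmodType R) : Prop :=
  finitely_generated P /\ projective P.

(* "the map out of P_i is zero on x": P_0 -> M is eps, P_(i+1) -> P_i is d i *)
Definition out_zero (M : lmodType R) (P : nat -> lmodType R)
  (d : forall i, {linear P i.+1 -> P i}) (eps : {linear P 0%N -> M}) (i : nat) : P i -> Prop :=
  match i return P i -> Prop with
  | 0%N => fun x => eps x = 0
  | i'.+1 => fun x => d i' x = 0
  end.

Definition fgp_resolution (j : nat) (M : lmodType R) : Prop :=
  exists (P : nat -> lmodType R) (d : forall i, {linear P i.+1 -> P i})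
         (eps : {linear P 0%N -> M}),
  [/\ (forall i, (i <= j)%N -> fg_projective (P i)),
      (forall m, exists x, eps x = m),
      (forall i, (i < j)%N -> forall y : P i.+1, out_zero d eps (d i y)),
      (forall i, (i < j)%N -> forall x : P i, out_zero d eps x -> exists y, d i y = x)
    & (forall x : P j, out_zero d eps x -> x = 0)].

(* n ∈ ℕ ∪ {∞} is encoded as [option nat], None = ∞.
   M ∈ P^{<n+1}: resolution length j <= n (any finite j when n = ∞). *)
Definition in_P_lt_succ (n : option nat) (M : lmodType R) : Prop :=
  match n with
  | Some m => exists j, (j <= m)%N /\ fgp_resolution j M
  | None => exists j, fgp_resolution j M
  end.

Definition n_exact (n : option nat) (A B C : lmodType R)
  (f : {linear A -> B}) (g : {linear B -> C}) : Prop :=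
  short_exact f g /\ forall M : lmodType R, in_P_lt_succ n M -> hom_cov_exact M f g.

Definition n_projective (n : option nat) (P : lmodType R) : Prop :=
  forall (A B C : lmodType R) (f : {linear A -> B}) (g : {linear B -> C}),
    n_exact n f g -> hom_cov_exact P f g.

Definition n_injective (n : option nat) (I : lmodType R) : Prop :=
  forall (A B C : lmodType R) (f : {linear A -> B}) (g : {linear B -> C}),
    n_exact n f g -> hom_contra_exact I f g.

End Defs.

(* Main.v *)
Require Import Defs.
From HB Require Import structures.
From mathcomp Require Import all_boot all_order all_algebra.
From mathcomp Require Import boolp classical_sets functions.
Import GRing.Theory Num.Theory Order.TTheory.
Local Open Scope ring_scope.

Definition fracq (r : rat) : rat := r - (Num.floor r)%:~R.
Lemma fracqDz r (z : int) : fracq (r + z%:~R) = fracq r.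
Proof. by rewrite /fracq floorDrz ?intr_int // intrKfloor rmorphD /= opprD addrACA subrr addr0. Qed.
Lemma fracqE r : exists z : int, fracq r = r + z%:~R.
Proof. by exists (- Num.floor r); rewrite /fracq rmorphN. Qed.
Lemma fracqK r : fracq (fracq r) = fracq r.
Proof. by have [z e] := fracqE r; rewrite {1}e fracqDz. Qed.
Lemma fracq0 r : (fracq r == 0) = (r \is a Num.int_num).
Proof. by rewrite /fracq subr_eq0 eq_sym intrEfloor. Qed.

Record qz := QZ { qv : rat; qvP : fracq qv == qv }.
HB.instance Definition _ := [isSub for qv].
HB.instance Definition _ := [Choice of qz by <:].
Definition piq (r : rat) : qz := @QZ (fracq r) (introT eqP (fracqK r)).
Lemma piq_eq r s : (piq r = piq s) <-> (fracq r = fracq s).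
Proof. split; first by move=> /(congr1 qv). by move=> e; apply: val_inj. Qed.
Lemma qvK x : piq (qv x) = x.
Proof. by apply: val_inj => /=; apply/eqP; case: x. Qed.
Lemma piqD r s : fracq (fracq r + s) = fracq (r + s).
Proof. by have [z ->] := fracqE r; rewrite addrAC fracqDz. Qed.

Definition qadd x y := piq (qv x + qv y).
Definition qopp x := piq (- qv x).
Definition qzero := piq 0.
Lemma qadd_pi r s : qadd (piq r) (piq s) = piq (r + s).
Proof. by apply/piq_eq => /=; rewrite piqD addrC piqD addrC. Qed.
Lemma qopp_pi r : qopp (piq r) = piq (- r).
Proof. apply/piq_eq => /=; have [z ->] := fracqE r. by rewrite opprD -rmorphN fracqDz. Qed.
Lemma qzA : associative qadd.
Proof. by move=> x y z; rewrite -[x]qvK -[y]qvK -[z]qvK !qadd_pi addrA. Qed.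
Lemma qzC : commutative qadd.
Proof. by move=> x y; rewrite -[x]qvK -[y]qvK !qadd_pi addrC. Qed.
Lemma qz0 : left_id qzero qadd.
Proof. by move=> x; rewrite -[x]qvK /qzero qadd_pi add0r. Qed.
Lemma qzN : left_inverse qzero qopp qadd.
Proof. by move=> x; rewrite -[x]qvK qopp_pi qadd_pi addNr. Qed.
HB.instance Definition _ := GRing.isZmodule.Build qz qzA qzC qz0 qzN.

Lemma piqD' r s : piq (r + s) = piq r + piq s.
Proof. by rewrite -qadd_pi. Qed.
Lemma piqN r : piq (- r) = - piq r.
Proof. by rewrite -qopp_pi. Qed.
Lemma piq0 : piq 0 = 0. Proof. by []. Qed.
Lemma piqMn r n : piq (r *+ n) = piq r *+ n.
Proof. by elim: n => [|n IH]; rewrite ?mulr0n // !mulrS piqD' IH. Qed.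
Lemma piqMz r (k : int) : piq (r *~ k) = piq r *~ k.
Proof. case: k => n; first by rewrite -!pmulrn piqMn. by rewrite NegzE !mulrNz -!pmulrn piqN piqMn. Qed.
Lemma piq_eq0 r : (piq r = 0) <-> (r \is a Num.int_num).
Proof.
rewrite -fracq0 -piq0; split; first by move/piq_eq; rewrite /fracq floor0 subr0 => ->.
by move/eqP => e; apply/piq_eq; rewrite e /fracq floor0 subr0.
Qed.

Lemma qz_div (m : nat) (x : qz) : (0 < m)%N -> exists e : qz, e *+ m = x.
Proof.
move=> m0; exists (piq (qv x / m%:R)); rewrite -piqMn -[RHS]qvK; congr piq.
by rewrite -[_ *+ m]mulr_natr divfK // pnatr_eq0 -lt0n.
Qed.

Lemma qz_ord (m : nat) : (1 < m)%N -> exists e : qz, e != 0 /\ e *+ m = 0.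
Proof.
move=> m1; have m0 : (m%:R : rat) != 0 by rewrite pnatr_eq0; case: m m1.
exists (piq (m%:R^-1)); split.
  apply/eqP => /piq_eq0 /intrP [z hz].
  have h2 : (0 < m%:R^-1 :> rat) by rewrite invr_gt0 ltr0n; move: m1; case: (m).
  have h1 : (m%:R^-1 :> rat) < 1 by rewrite invf_lt1 ?ltr1n // ltr0n; move: m1; case: (m).
  move: h1 h2; rewrite hz -[1]/((1%:Z)%:~R : rat) ltr_int ltr0z.
  by case: z {hz} => // [[|n]] //.
rewrite -piqMn -[_ *+ m]mulr_natr mulVf //; apply/piq_eq0; exact: int_num1.
Qed.

Set Implicit Arguments. Unset Strict Implicit.

Section Inj.
Variable G : zmodType.
Definition subgrp (S : G -> Prop) := S 0 /\ forall x y, S x -> S y -> S (x - y).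
Definition addon (S : G -> Prop) (phi : G -> qz) :=
  forall x y, S x -> S y -> phi (x - y) = phi x - phi y.

Lemma subgrpN S x : subgrp S -> S x -> S (- x).
Proof. by move=> [S0 SB] Sx; rewrite -sub0r; apply: SB. Qed.
Lemma subgrpD S x y : subgrp S -> S x -> S y -> S (x + y).
Proof. by move=> hS Sx Sy; rewrite -[y]opprK; apply: hS.2 => //; apply: subgrpN. Qed.
Lemma subgrpMn S x n : subgrp S -> S x -> S (x *+ n).
Proof. move=> hS Sx; elim: n => [|n IH]; first by rewrite mulr0n; exact: hS.1. by rewrite mulrS; apply: subgrpD. Qed.
Lemma subgrpMz S x k : subgrp S -> S x -> S (x *~ k).
Proof.
move=> hS Sx; case: k => n; first by rewrite -pmulrn; apply: subgrpMn.
by rewrite NegzE mulrNz; apply: subgrpN => //; rewrite -pmulrn; apply: subgrpMn.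
Qed.

Lemma addon0 S phi : subgrp S -> addon S phi -> phi 0 = 0.
Proof. by move=> [S0 _] h; rewrite -(subrr 0) h // subrr. Qed.
Lemma addonN S phi x : subgrp S -> addon S phi -> S x -> phi (- x) = - phi x.
Proof. move=> hS h Sx; have := h 0 x hS.1 Sx; rewrite sub0r (addon0 hS h) sub0r; exact. Qed.
Lemma addonD S phi x y : subgrp S -> addon S phi -> S x -> S y -> phi (x + y) = phi x + phi y.
Proof.
move=> hS h Sx Sy; have := h x (- y) Sx (subgrpN hS Sy).
by rewrite opprK (addonN hS h Sy) opprK.
Qed.
Lemma addonMn S phi x n : subgrp S -> addon S phi -> S x -> phi (x *+ n) = phi x *+ n.
Proof.
move=> hS h Sx; elim: n => [|n IH]; first by rewrite !mulr0n (addon0 hS h).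
by rewrite !mulrS (addonD hS h Sx (subgrpMn n hS Sx)) IH.
Qed.
Lemma addonMz S phi x k : subgrp S -> addon S phi -> S x -> phi (x *~ k) = phi x *~ k.
Proof.
move=> hS h Sx; case: k => n; first by rewrite -!pmulrn (addonMn n hS h Sx).
by rewrite NegzE !mulrNz -!pmulrn (addonN hS h (subgrpMn _ hS Sx)) (addonMn _ hS h Sx).
Qed.

Lemma ideal_gen S v : subgrp S ->
  (forall k, S (v *~ k) -> k = 0) \/
  exists m : nat, [/\ (0 < m)%N, S (v *+ m) & forall k, S (v *~ k) -> (m%:Z %| k)%Z].
Proof.
move=> hS; have [[n [n0 Sn]]|nP] := pselect (exists n : nat, (0 < n)%N /\ S (v *+ n)); last first.
  left=> k; case: k => n Sk; first by case: n Sk => // n Sk; case: nP; exists n.+1; rewrite pmulrn.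
  case: nP; exists n.+1; split => //; move: Sk; rewrite NegzE mulrNz -pmulrn => /(subgrpN hS).
  by rewrite opprK.
right.
pose P := fun n : nat => `[< (0 < n)%N /\ S (v *+ n) >].
have exP : exists n, P n by exists n; apply/asboolP.
have [m /asboolP [m0 Sm] mmin] := ex_minnP exP.
exists m; split => // k Sk; apply/dvdz_mod0P.
have mz0 : (m%:Z != 0) by rewrite eqz_nat -lt0n.
have rge0 := modz_ge0 k mz0.
have rlt : ((k %% m%:Z)%Z < m%:Z) by apply: ltz_pmod; rewrite ltz_nat.
have Sr : S (v *~ (k %% m%:Z)%Z).
  have -> : v *~ (k %% m%:Z)%Z = v *~ k - (v *+ m) *~ (k %/ m%:Z)%Z.
    have e2 : v *~ k = (v *+ m) *~ (k %/ m%:Z)%Z + v *~ (k %% m%:Z)%Z.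
      by rewrite {1}(divz_eq k m%:Z) mulrzDr pmulrn -mulrzA [(m%:Z * _)%R]mulrC.
    by rewrite e2 addrAC subrr add0r.
  by apply: hS.2 => //; apply: subgrpMz.
move: rge0 rlt Sr; case: (k %% m%:Z)%Z => // r _ rlt Sr.
case: r rlt Sr => // r rlt Sr.
have Pr : P r.+1 by apply/asboolP; split => //; rewrite pmulrn.
by have := mmin _ Pr; rewrite leqNgt -ltz_nat rlt.
Qed.

Definition ext_dom S v := fun x => exists sk : G * int, S sk.1 /\ x = sk.1 + v *~ sk.2.
Definition ext_fun S (phi : G -> qz) v (e : qz) := fun x =>
  match pselect (ext_dom S v x) with
  | left H => let sk := proj1_sig (cid H) in phi sk.1 + e *~ sk.2
  | right _ => 0 end.

Lemma rearr (V : zmodType) (a b c d : V) : a - b = c - d -> c + b = d + a.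
Proof.
move=> h; apply/eqP; rewrite -subr_eq0 opprD addrACA -h.
by rewrite addrA subrK subrr.
Qed.

Lemma ext_funE S phi v e s k : subgrp S -> addon S phi ->
  (forall k, S (v *~ k) -> e *~ k = phi (v *~ k)) ->
  S s -> ext_fun S phi v e (s + v *~ k) = phi s + e *~ k.
Proof.
move=> hS hp he Ss; rewrite /ext_fun; case: pselect => [H|H]; last first.
  by case: H; exists (s, k).
case: cid => [[s' k'] /= [Ss' E]].
have D : v *~ (k - k') = s' - s.
  apply: (@addrI _ s); rewrite mulrzBr addrA E [RHS]addrC addrNK.
  by rewrite -addrA subrr addr0.
have Sd : S (v *~ (k - k')) by rewrite D; apply: hS.2.
have := he _ Sd; rewrite D hp // mulrzBr.
exact: rearr.
Qed.

Lemma ext1 S phi v e : subgrp S -> addon S phi ->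
  (forall k, S (v *~ k) -> e *~ k = phi (v *~ k)) ->
  [/\ subgrp (ext_dom S v), addon (ext_dom S v) (ext_fun S phi v e),
      forall x, S x -> ext_dom S v x /\ ext_fun S phi v e x = phi x,
      ext_dom S v v & ext_fun S phi v e v = e].
Proof.
move=> hS hp he; have E := ext_funE _ hS hp he.
split.
- split; first by exists (0, 0); split; [exact: hS.1 | rewrite /= mulr0z addr0].
  move=> x y [[s k] /= [Ss ->]] [[s' k'] /= [Ss' ->]].
  exists (s - s', k - k') => /=; split; first by apply: hS.2.
  by rewrite mulrzBr opprD addrACA.
- move=> x y [[s k] /= [Ss ->]] [[s' k'] /= [Ss' ->]].
  have -> : s + v *~ k - (s' + v *~ k') = (s - s') + v *~ (k - k') by rewrite mulrzBr opprD addrACA.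
  rewrite !E //; last exact: hS.2.
  by rewrite hp // mulrzBr opprD addrACA.
- move=> x Sx; split; first by exists (x, 0); rewrite /= mulr0z addr0.
  by have := E x 0 Sx; rewrite !mulr0z !addr0.
- exists (0, 1); split; [exact: hS.1 | by rewrite /= add0r mulr1z].
- by have := E 0 1 hS.1; rewrite !mulr1z !add0r (addon0 hS hp) add0r.
Qed.
End Inj.

Section Max.
Variable G : zmodType.
Variables (S : G -> Prop) (phi : G -> qz).
Hypotheses (hS : subgrp S) (hp : addon S phi).

Definition good (p : (G -> Prop) * (G -> qz)) :=
  [/\ subgrp p.1, addon p.1 p.2 & forall x, S x -> p.1 x /\ p.2 x = phi x].
Definition T := {p | good p}.
Definition Rel (p q : T) : bool :=
  `[< forall x, (sval p).1 x -> (sval q).1 x /\ (sval q).2 x = (sval p).2 x >].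

Lemma inj_ext : exists Phi : G -> qz,
  (forall x y, Phi (x - y) = Phi x - Phi y) /\ forall x, S x -> Phi x = phi x.
Proof.
have g0 : good (S, phi) by split.
have [t tmax] : exists t : T, premaximal Rel t.
apply: (@ZL_preorder T (exist _ _ g0) Rel).
- by move=> t; apply/asboolP => x.
- move=> r s t /asboolP rs /asboolP st; apply/asboolP => x /rs [/st [? ->] ->]; done.
- move=> A Atot.
  pose U := fun x => S x \/ exists p, A p /\ (sval p).1 x.
  pose Phi := fun x => match pselect (exists p, A p /\ (sval p).1 x) with
    | left H => (sval (proj1_sig (cid H))).2 x | right _ => phi x end.
  have agree : forall p x, A p -> (sval p).1 x -> Phi x = (sval p).2 x.
    move=> p x Ap px; rewrite /Phi; case: pselect => [H|H]; last by case: H; exists p.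
    case: cid => q [Aq qx] /=.
    have [/asboolP pq|/asboolP qp] := Atot _ _ Ap Aq.
      by have [] := pq _ px.
    by have [_ ->] := qp _ qx.
  have agree0 : forall x, S x -> Phi x = phi x.
    move=> x Sx; rewrite /Phi; case: pselect => [H|H] //.
    case: cid => q [Aq qx] /=.
    by case: (svalP q) => _ _ /(_ _ Sx) [].
  have common : forall x y, U x -> U y -> (S x /\ S y) \/ exists p, [/\ A p, (sval p).1 x & (sval p).1 y].
    move=> x y [Sx|[p [Ap px]]] [Sy|[q [Aq qy]]]; first by left.
    - by right; exists q; split => //; case: (svalP q) => _ _ /(_ _ Sx) [].
    - by right; exists p; split => //; case: (svalP p) => _ _ /(_ _ Sy) [].
    - right; have [/asboolP pq|/asboolP qp] := Atot _ _ Ap Aq.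
        by exists q; split => //; have [] := pq _ px.
      by exists p; split => //; have [] := qp _ qy.
  have gU : good (U, Phi).
    split => /=.
    - split; first by left; exact: hS.1.
      move=> x y Ux Uy; have [[Sx Sy]|[p [Ap px py]]] := common _ _ Ux Uy.
        by left; apply: hS.2.
      by right; exists p; split => //; case: (svalP p) => [[_ sB] _ _]; apply: sB.
    - move=> x y Ux Uy; have [[Sx Sy]|[p [Ap px py]]] := common _ _ Ux Uy.
        by rewrite !agree0 //; [apply: hp | apply: hS.2].
      case: (svalP p) => [[_ sB] ad _].
      by rewrite !(agree p) //; [apply: ad | apply: sB].
    - by move=> x Sx; split; [left | apply: agree0].
  exists (exist _ _ gU) => p Ap; apply/asboolP => x px /=.
  by split; [right; exists p | apply: agree].
case: t tmax => [[St Pt] gt] tmax.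
have [sub addt ext] := gt; simpl in sub, addt, ext.
suff all : forall v, St v.
  exists Pt; split; first by move=> x y; apply: addt.
  by move=> x /ext [].
move=> v; apply: contrapT => nv.
have [e he] : exists e : qz, forall k, St (v *~ k) -> e *~ k = Pt (v *~ k).
  have [K0|[m [m0 Sm mdiv]]] := ideal_gen v sub.
    by exists 0 => k /K0 ->; rewrite mulr0z (addon0 sub addt).
  have [e em] := @qz_div m (Pt (v *+ m)) m0.
  exists e => k /mdiv /dvdzP [q ->].
  rewrite mulrC mulrzA mulrzA (addonMz _ sub addt) -?pmulrn ?em //.
have [s1 s2 s3 s4 s5] := ext1 sub addt he.
have gs : good (ext_dom St v, ext_fun St Pt v e).
  split => // x Sx; have [tx <-] := ext _ Sx; exact: s3.
have := tmax (exist _ _ gs).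
have Rts : Rel (exist good (St, Pt) gt) (exist good _ gs) by apply/asboolP => x /= /s3.
move=> /(_ Rts) /asboolP /(_ v s4) [] /=.
done.
Qed.
End Max.

Lemma cogen (G : zmodType) (S : G -> Prop) v : subgrp S -> ~ S v ->
  exists Phi : G -> qz, [/\ forall x y, Phi (x - y) = Phi x - Phi y,
     forall x, S x -> Phi x = 0 & Phi v != 0].
Proof.
move=> hS nSv.
have hp : addon S (fun _ => 0) by move=> *; rewrite subr0.
have [e [e0 he]] : exists e : qz, e != 0 /\ forall k, S (v *~ k) -> e *~ k = 0.
  have [K0|[m [m0 Sm mdiv]]] := ideal_gen v hS.
    have [e [e0 _]] := @qz_ord 2 isT.
    by exists e; split => // k /K0 ->; rewrite mulr0z.
  have m1 : (1 < m)%N by case: m m0 Sm {mdiv} => [|[|m]] //; rewrite mulr1n.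
  have [e [e0 em]] := @qz_ord m m1.
  exists e; split => // k /mdiv /dvdzP [q ->].
  by rewrite mulrC mulrzA -pmulrn em mul0rz.
have [s1 s2 s3 s4 s5] := @ext1 G S (fun _ => 0) v e hS hp he.
have [Phi [aP eP]] := inj_ext s1 s2.
exists Phi; split => //.
  by move=> x Sx; have [ex <-] := s3 _ Sx; apply: eP.
by rewrite eP // s5.
Qed.

Section Lin.
Variable R : pzRingType.
Definition islin {U V : lmodType R} (F : U -> V) :=
  forall (r : R) x y, F (r *: x + y) = r *: F x + F y.
Definition mklin (U V : lmodType R) (F : U -> V) (H : islin F) : {linear U -> V} :=
  HB.pack_for {linear U -> V} F (GRing.isLinear.Build _ _ _ _ F H).
Lemma mklinE U V F H x : @mklin U V F H x = F x. Proof. by []. Qed.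
Lemma linP (U V : lmodType R) (F : {linear U -> V}) : islin F.
Proof. by move=> r x y; rewrite linearP. Qed.
Lemma islin0 (U V : lmodType R) : islin (0 : U -> V).
Proof. by move=> r x y; rewrite /= scaler0 addr0. Qed.
Lemma islinD (U V : lmodType R) (F G : U -> V) : islin F -> islin G -> islin (F + G).
Proof. by move=> hF hG r x y; rewrite !addrfctE /= hF hG scalerDr addrACA. Qed.
Lemma islinN (U V : lmodType R) (F : U -> V) : islin F -> islin (- F).
Proof. by move=> hF r x y; rewrite !opprfctE /= hF opprD scalerN. Qed.
Lemma islinB (U V : lmodType R) (F G : U -> V) : islin F -> islin G -> islin (F - G).
Proof. by move=> hF hG; apply: islinD => //; apply: islinN. Qed.
Lemma islin_sum (U V : lmodType R) k (F : 'I_k -> U -> V) :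
  (forall i, islin (F i)) -> islin (\sum_(i < k) F i).
Proof.
move=> h; elim/big_ind: _ => //; [exact: islin0 | move=> ? ?; exact: islinD].
Qed.
Lemma islin_comp (U V W : lmodType R) (F : V -> W) (G : U -> V) :
  islin F -> islin G -> islin (F \o G).
Proof. by move=> hF hG r x y; rewrite /= hG hF. Qed.
Lemma islin_sum_eval (U V : lmodType R) (F : U -> V) (k : nat) (c : 'I_k -> R) (x : 'I_k -> U) :
  islin F -> F (\sum_(i < k) c i *: x i) = \sum_(i < k) c i *: F (x i).
Proof. by move=> h; rewrite -(mklinE h) linear_sum; apply: eq_bigr => i _; rewrite linearZ. Qed.
Lemma islinE0 (U V : lmodType R) (F : U -> V) : islin F -> F 0 = 0.
Proof. by move=> h; rewrite -(mklinE h) linear0. Qed.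
Lemma islinZ (U V : lmodType R) (F : U -> V) r x : islin F -> F (r *: x) = r *: F x.
Proof. by move=> h; rewrite -(mklinE h) linearZ. Qed.
Lemma islinDE (U V : lmodType R) (F : U -> V) x y : islin F -> F (x + y) = F x + F y.
Proof. by move=> h; rewrite -(mklinE h) linearD. Qed.
Lemma islinBE (U V : lmodType R) (F : U -> V) x y : islin F -> F (x - y) = F x - F y.
Proof. by move=> h; rewrite -(mklinE h) linearB. Qed.
End Lin.


Lemma rearr2 (V : zmodType) (a b c d : V) : a + b = c + d -> a - c = d - b.
Proof. by move=> e; rewrite -[a](addrK b) e addrAC [c + d]addrC addrK. Qed.

Section Gen.
Variable R : pzRingType.

Lemma factor_surj (X Y Z : lmodType R) (q : X -> Y) (u : X -> Z) :
  islin q -> islin u -> (forall y, exists x, q x = y) -> (forall x, q x = 0 -> u x = 0) ->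
  exists h : Y -> Z, islin h /\ forall x, h (q x) = u x.
Proof.
move=> lq lu sq ku.
have E : forall x x', q x = q x' -> u x = u x'.
  move=> x x' e; apply/eqP; rewrite -subr_eq0 -islinBE //; apply/eqP/ku.
  by rewrite islinBE // e subrr.
pose h y := u (sval (cid (sq y))).
have hq : forall x, h (q x) = u x.
  by move=> x; rewrite /h; case: cid => x' /= e; apply: E.
exists h; split => // r y y'.
have [x <-] := sq y; have [x' <-] := sq y'.
by rewrite -lq !hq lu.
Qed.

Lemma factor_inj (A B C : lmodType R) (f : {linear A -> B}) (g : {linear B -> C}) :
  short_exact f g -> forall (X : lmodType R) (u : X -> B), islin u ->
  (forall x, g (u x) = 0) -> exists w : X -> A, islin w /\ forall x, f (w x) = u x.
Proof.
move=> [fi gf ex gs] X u lu gu.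
pose w x := sval (cid (ex _ (gu x))).
have fw : forall x, f (w x) = u x by move=> x; rewrite /w; case: cid.
exists w; split => // r x y.
apply/eqP; rewrite -subr_eq0; apply/eqP/fi.
by rewrite linearB linearP /= !fw lu subrr.
Qed.

Lemma cov_of_4 (M A B C : lmodType R) (f : {linear A -> B}) (g : {linear B -> C}) :
  short_exact f g ->
  (forall h : {linear M -> C}, exists h' : {linear M -> B}, forall x, g (h' x) = h x) ->
  hom_cov_exact M f g.
Proof.
move=> se h4; have [fi gf ex gs] := se; split => //.
- by move=> h hf x; apply: fi.
- move=> h hg; have [w [lw fw]] := factor_inj se (linP h) hg.
  by exists (mklin lw).
Qed.

Lemma contra_of_4 (I A B C : lmodType R) (f : {linear A -> B}) (g : {linear B -> C}) :
  short_exact f g ->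
  (forall h : {linear A -> I}, exists h' : {linear B -> I}, forall a, h' (f a) = h a) ->
  hom_contra_exact I f g.
Proof.
move=> se h4; have [fi gf ex gs] := se; split => //.
- by move=> h hg c; have [b <-] := gs c; apply: hg.
- by move=> h a; rewrite gf linear0.
- move=> h hf.
  have ku : forall b, g b = 0 -> h b = 0 by move=> b /ex [a <-]; apply: hf.
  have [h' [lh' e]] := factor_surj (linP g) (linP h) gs ku.
  by exists (mklin lh').
Qed.

Lemma dual_basis (P : lmodType R) : fg_projective P ->
  exists k (xs : 'I_k -> P -> R^o) (ps : 'I_k -> P),
    (forall i, islin (xs i)) /\ forall p, p = \sum_(i < k) (xs i p : R) *: ps i.
Proof.
move=> [[k [v hv]] pr].
pose pi (c : 'I_k -> R^o) : P := \sum_(i < k) (c i : R) *: v i.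
have lpi : islin pi.
  move=> r c c'; rewrite /pi scaler_sumr -big_split /=; apply: eq_bigr => i _.
  by rewrite scalerDl scalerA.
have spi : forall y, exists x, mklin lpi x = y.
  by move=> y; have [c ->] := hv y; exists c.
have lid : islin (fun p : P => p) by [].
have [s hs] := pr _ _ _ spi (mklin lid).
exists k, (fun i p => s p i), v; split.
  by move=> i r x y; rewrite linearP.
by move=> p; rewrite -[p in LHS](hs p).
Qed.
End Gen.
Section IMod.
Variable R : pzRingType.
Hypothesis comm : forall a b : R, a * b = b * a.
Variables (P0 P1 : lmodType R) (d0 : {linear P1 -> P0}).

Definition scl (r : R) (x : P1 -> R^o) : P1 -> R^o := fun p => r * x p.
Lemma islin_scl r x : islin x -> islin (scl r x).
Proof.
move=> h s p q; rewrite /scl h /= mulrDr; congr (_ + _).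
by change (r * (s * x p) = s * (r * x p)); rewrite !mulrA (comm r s).
Qed.
Definition scl0 (r : R) (x : P0 -> R^o) : P0 -> R^o := fun p => r * x p.
Lemma islin_scl0 r x : islin x -> islin (scl0 r x).
Proof.
move=> h s p q; rewrite /scl0 h /= mulrDr; congr (_ + _).
by change (r * (s * x p) = s * (r * x p)); rewrite !mulrA (comm r s).
Qed.

Definition Iprop (psi : (P1 -> R^o) -> qz) :=
  [/\ forall x, ~ islin x -> psi x = 0,
      forall x y, islin x -> islin y -> psi (x + y) = psi x + psi y
    & forall y : P0 -> R^o, islin y -> psi (y \o d0) = 0].

Record Ity := MkI { ifun :> (P1 -> R^o) -> qz; iprop : Iprop ifun }.
HB.instance Definition _ := gen_eqMixin Ity.
HB.instance Definition _ := gen_choiceMixin Ity.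

Lemma Iext (a b : Ity) : (forall x, a x = b x) -> a = b.
Proof.
case: a b => [fa pa] [fb pb] /= e.
have efab : fa = fb by apply/funext.
subst; congr MkI; exact: Prop_irrelevance.
Qed.

Lemma Ipsi0 (psi : Ity) : psi 0 = 0.
Proof.
case: psi => f [_ hD _] /=.
have := hD 0 0 (@islin0 _ _ _) (@islin0 _ _ _); rewrite addr0 => /eqP.
by rewrite -subr_eq subrr eq_sym => /eqP.
Qed.

Lemma Iprop0 : Iprop (fun _ => 0).
Proof. by split => // *; rewrite addr0. Qed.
Lemma IpropD (a b : Ity) : Iprop (fun x => a x + b x).
Proof.
case: a b => [fa [a0 aD aZ]] [fb [b0 bD bZ]] /=; split.
- by move=> x nx; rewrite a0 ?b0 ?addr0.
- by move=> x y lx ly; rewrite aD ?bD // addrACA.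
- by move=> y ly; rewrite aZ ?bZ ?addr0.
Qed.
Lemma IpropN (a : Ity) : Iprop (fun x => - a x).
Proof.
case: a => [fa [a0 aD aZ]] /=; split.
- by move=> x nx; rewrite a0 ?oppr0.
- by move=> x y lx ly; rewrite aD ?opprD.
- by move=> y ly; rewrite aZ ?oppr0.
Qed.

Definition Izero := MkI Iprop0.
Definition Iadd a b := MkI (IpropD a b).
Definition Iopp a := MkI (IpropN a).
Lemma IaddA : associative Iadd. Proof. by move=> a b c; apply: Iext => x /=; rewrite addrA. Qed.
Lemma IaddC : commutative Iadd. Proof. by move=> a b; apply: Iext => x /=; rewrite addrC. Qed.
Lemma Iadd0 : left_id Izero Iadd. Proof. by move=> a; apply: Iext => x /=; rewrite add0r. Qed.
Lemma IaddN : left_inverse Izero Iopp Iadd. Proof. by move=> a; apply: Iext => x /=; rewrite addNr. Qed.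
HB.instance Definition _ := GRing.isZmodule.Build Ity IaddA IaddC Iadd0 IaddN.

Lemma IaddE (a b : Ity) x : (a + b) x = a x + b x. Proof. by []. Qed.
Lemma IoppE (a : Ity) x : (- a) x = - a x. Proof. by []. Qed.
Lemma I0E x : (0 : Ity) x = 0. Proof. by []. Qed.
Lemma IsumE k (F : 'I_k -> Ity) x : (\sum_(i < k) F i) x = \sum_(i < k) F i x.
Proof. by elim/big_rec2: _ => // i y a _ <-. Qed.

Definition Iscl_fun (r : R) (a : Ity) := fun x => if `[< islin x >] then a (scl r x) else 0.
Lemma IpropZ r (a : Ity) : Iprop (Iscl_fun r a).
Proof.
rewrite /Iscl_fun; case: a => [fa [a0 aD aZ]] /=; split.
- by move=> x nx; case: asboolP.
- move=> x y lx ly; have lxy := islinD lx ly.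
  do 3 (case: asboolP => // _).
  rewrite -aD; try exact: islin_scl.
  by congr fa; apply/funext => p; rewrite /scl /= mulrDr.
- move=> y ly; have lyd := islin_comp ly (linP d0).
  case: asboolP => // _.
  have -> : scl r (y \o d0) = (scl0 r y) \o d0 by [].
  by apply: aZ; apply: islin_scl0.
Qed.
Definition Iscale r a := MkI (IpropZ r a).
Lemma IscaleE r (a : Ity) x : islin x -> Iscale r a x = a (scl r x).
Proof. by move=> lx; rewrite /= /Iscl_fun; case: asboolP. Qed.
Lemma IscaleE' r (a : Ity) x : ~ islin x -> Iscale r a x = 0.
Proof. by move=> lx; rewrite /= /Iscl_fun; case: asboolP. Qed.
Lemma Inonlin (a : Ity) x : ~ islin x -> a x = 0.
Proof. by case: a => f [h _ _] /=; apply: h. Qed.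
Lemma IlinD (a : Ity) x y : islin x -> islin y -> a (x + y) = a x + a y.
Proof. by case: a => f [_ h _] /=; apply: h. Qed.
Lemma Ivanish (a : Ity) y : islin y -> a (y \o d0) = 0.
Proof. by case: a => f [_ _ h] /=; apply: h. Qed.

Lemma IscaleA a b v : Iscale a (Iscale b v) = Iscale (a * b) v.
Proof.
apply: Iext => x; have [lx|nx] := pselect (islin x); last by rewrite !IscaleE'.
rewrite !IscaleE //; last exact: islin_scl.
by congr (v _); apply/funext => p; rewrite /scl mulrA [b * a]comm.
Qed.
Lemma Iscale1 : left_id 1 Iscale.
Proof.
move=> v; apply: Iext => x; have [lx|nx] := pselect (islin x); last by rewrite IscaleE' ?Inonlin.
by rewrite IscaleE //; congr (v _); apply/funext => p; rewrite /scl mul1r.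
Qed.
Lemma IscaleDr : right_distributive Iscale +%R.
Proof.
move=> r a b; apply: Iext => x; have [lx|nx] := pselect (islin x); last by rewrite !IaddE !IscaleE' ?addr0.
by rewrite !IaddE !IscaleE.
Qed.
Lemma IscaleDl v : {morph Iscale^~ v : a b / a + b}.
Proof.
move=> a b; apply: Iext => x; have [lx|nx] := pselect (islin x); last by rewrite !IaddE !IscaleE' ?addr0.
rewrite !IaddE !IscaleE // -IlinD; try exact: islin_scl.
by congr (v _); apply/funext => p; rewrite /scl /= mulrDl.
Qed.
HB.instance Definition _ := GRing.Zmodule_isLmodule.Build R Ity IscaleA Iscale1 IscaleDr IscaleDl.

Lemma IZE r (a : Ity) x : islin x -> (r *: a) x = a (scl r x).
Proof. exact: IscaleE. Qed.
Lemma Ilin_sum (a : Ity) k (F : 'I_k -> P1 -> R^o) :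
  (forall i, islin (F i)) -> a (\sum_(i < k) F i) = \sum_(i < k) a (F i).
Proof.
move=> h; suff [] : islin (\sum_(i < k) F i) /\ a (\sum_(i < k) F i) = \sum_(i < k) a (F i) by [].
apply: (big_ind2 (fun x y => islin x /\ a x = y)).
- by split; [exact: islin0 | rewrite Ipsi0].
- by move=> x1 x2 y1 y2 [l1 e1] [l2 e2]; split; [exact: islinD | rewrite IlinD ?e1 ?e2].
- by move=> i _; split.
Qed.

Variables (k1 : nat) (xs : 'I_k1 -> P1 -> R^o) (ps : 'I_k1 -> P1).
Hypotheses (hxs : forall i, islin (xs i)) (hps : forall p, p = \sum_(i < k1) (xs i p : R) *: ps i).
Variables (k0 : nat) (ys : 'I_k0 -> P0 -> R^o) (qs : 'I_k0 -> P0).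
Hypotheses (hys : forall i, islin (ys i)) (hqs : forall p, p = \sum_(i < k0) (ys i p : R) *: qs i).

Definition Phi (gam : P1 -> Ity) : qz := \sum_(i < k1) gam (ps i) (xs i).

Lemma PhiZ (W : P0 -> Ity) : islin W -> Phi (W \o d0) = 0.
Proof.
move=> lW; rewrite /Phi.
have E : forall i, W (d0 (ps i)) (xs i) =
    \sum_(k < k0) W (qs k) (scl (ys k (d0 (ps i))) (xs i)).
  move=> i; rewrite {1}(hqs (d0 (ps i))) islin_sum_eval // IsumE.
  by apply: eq_bigr => k _; rewrite IZE.
under eq_bigr do rewrite /= E.
rewrite exchange_big /= big1 // => k _.
rewrite -Ilin_sum; last by move=> i; apply: islin_scl.
have -> : \sum_(i < k1) scl (ys k (d0 (ps i))) (xs i) = ys k \o d0.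
  apply/funext => p; rewrite fct_sumE /= /scl.
  have -> : d0 p = \sum_(i < k1) (xs i p : R) *: d0 (ps i).
    by rewrite {1}(hps p) islin_sum_eval //; apply: linP.
  rewrite islin_sum_eval //.
  by apply: eq_bigr => i _; rewrite comm.
exact: (Ivanish (W (qs k)) (hys k)).
Qed.

Variables (n : option nat) (M : lmodType R) (eps : {linear P0 -> M}).
Hypotheses (eps_surj : forall m, exists x, eps x = m) (ed0 : forall y, eps (d0 y) = 0)
  (keps : forall x, eps x = 0 -> exists y, d0 y = x) (Min : in_P_lt_succ n M).

Lemma FE (Y : lmodType R) (u : P0 -> Y) : islin u -> (forall p1, u (d0 p1) = 0) ->
  exists h : M -> Y, islin h /\ forall p, h (eps p) = u p.
Proof.
move=> lu hu; apply: (factor_surj (linP eps) lu eps_surj).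
by move=> x /keps [y <-]; apply: hu.
Qed.

Lemma KL (A B C : lmodType R) (f : {linear A -> B}) (g : {linear B -> C}) :
  short_exact f g -> hom_cov_exact M f g ->
  forall (del : P1 -> A) (u : P0 -> B), islin del -> islin u ->
  (forall p, f (del p) = u (d0 p)) -> exists w : P0 -> A, islin w /\ forall p, del p = w (d0 p).
Proof.
move=> se [_ _ _ lift] del u ld lu hdu; have [fi gf ex gs] := se.
have gu0 : forall p, (g \o u) (d0 p) = 0 by move=> p; rewrite /= -hdu gf.
have [h [lh hh]] := FE (islin_comp (linP g) lu) gu0.
have [k hk] := lift (mklin lh).
pose v := fun p => u p - k (eps p).
have lv : islin v by apply: islinB lu (islin_comp (linP k) (linP eps)).
have gv : forall p, g (v p) = 0 by move=> p; rewrite /v linearB /= hk mklinE hh /= subrr.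
have [w [lw fw]] := factor_inj se lv gv.
exists w; split => // p; apply/eqP; rewrite -subr_eq0; apply/eqP/fi.
by rewrite linearB /= fw hdu /v ed0 linear0 subr0 subrr.
Qed.

Definition sm (A : lmodType R) (x : P1 -> R^o) (b : A) : P1 -> A := fun p => (x p : R) *: b.
Definition sm0 (A : lmodType R) (y : P0 -> R^o) (b : A) : P0 -> A := fun p => (y p : R) *: b.
Lemma islin_sm (A : lmodType R) x (b : A) : islin x -> islin (sm x b).
Proof.
move=> lx r p q; rewrite /sm lx scalerDl.
by have -> : r *: (x p : R^o) = r * x p by []; rewrite scalerA.
Qed.
Lemma islin_sm0 (A : lmodType R) y (b : A) : islin y -> islin (sm0 y b).
Proof.
move=> lx r p q; rewrite /sm0 lx scalerDl.
by have -> : r *: (y p : R^o) = r * y p by []; rewrite scalerA.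
Qed.

Lemma addD_all (G : zmodType) (Psi : G -> qz) :
  (forall x y, Psi (x - y) = Psi x - Psi y) -> forall x y, Psi (x + y) = Psi x + Psi y.
Proof.
move=> h x y; have sT : subgrp (fun _ : G => True) by [].
by apply: (addonD sT).
Qed.

Section Build.
Variables (A : lmodType R) (psi : (P1 -> A) -> qz).
Hypothesis psiB : forall x y, psi (x - y) = psi x - psi y.
Hypothesis psiV : forall y a, islin y -> psi (sm0 y a \o d0) = 0.

Definition bfun (a : A) := fun x => if `[< islin x >] then psi (sm x a) else 0.
Lemma bprop a : Iprop (bfun a).
Proof.
have psiD := addD_all psiB.
rewrite /bfun; split.
- by move=> x nx; case: asboolP.
- move=> x y lx ly; have lxy := islinD lx ly.
  do 3 (case: asboolP => // _).
  by rewrite -psiD; congr psi; apply/funext => p; rewrite /sm /= scalerDl.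
- move=> y ly; have lyd := islin_comp ly (linP d0).
  case: asboolP => // _.
  have -> : sm (y \o d0) a = sm0 y a \o d0 by [].
  exact: psiV.
Qed.
Definition bmap a : Ity := MkI (bprop a).
Lemma bmap_lin : islin bmap.
Proof.
have psiD := addD_all psiB.
move=> r a a'; apply: Iext => x; rewrite IaddE.
have [lx|nx] := pselect (islin x); last by rewrite IscaleE' // /= /bfun (asboolF nx) addr0.
rewrite IZE // /= /bfun.
rewrite (asboolT lx) (asboolT (islin_scl r lx)).
rewrite -psiD; congr psi; apply/funext => p; rewrite /sm /scl /= scalerDr scalerA.
by rewrite comm.
Qed.
Lemma bmapE a x : islin x -> bmap a x = psi (sm x a).
Proof. by move=> lx; rewrite /= /bfun; case: asboolP. Qed.
End Build.

Lemma sum_smE (x : P1 -> R^o) :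
  islin x -> \sum_(i < k1) scl (x (ps i)) (xs i) = x.
Proof.
move=> lx; apply/funext => p; rewrite fct_sumE /scl.
rewrite [in RHS](hps p) islin_sum_eval //.
by apply: eq_bigr => i _; rewrite comm.
Qed.

Lemma I_ninj : n_injective n Ity.
Proof.
move=> A B C f g [se hc]; have hcM := hc M Min; have [fi gf ex gs] := se.
apply: contra_of_4 => // alpha.
pose Psa (gam : P1 -> A) : qz := \sum_(i < k1) alpha (gam (ps i)) (xs i).
have PsaB : forall g1 g2, Psa (g1 - g2) = Psa g1 - Psa g2.
  by move=> g1 g2; rewrite /Psa -sumrB; apply: eq_bigr => i _; rewrite /= linearB.
have Psa0 : Psa 0 = 0 by rewrite /Psa big1 // => i _; rewrite /= linear0.
have PsaZ : forall w, islin w -> Psa (w \o d0) = 0.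
  by move=> w lw; exact: (PhiZ (islin_comp (linP alpha) lw)).
pose S' := fun F : P1 -> B => exists gam u, [/\ islin gam, islin u & F = (f \o gam) + (u \o d0)].
pose phi := fun F => match pselect (S' F) with left H => Psa (sval (cid H)) | right _ => 0 end.
have phiE : forall gam u, islin gam -> islin u -> phi ((f \o gam) + (u \o d0)) = Psa gam.
  move=> gam u lg lu; rewrite /phi; case: pselect => [H|[]]; last by exists gam, u.
  case: cid => gam' [u' [lg' lu' E]] /=.
  have [w [lw ew]] : exists w : P0 -> A, islin w /\ forall p, (gam - gam') p = w (d0 p).
    apply: (KL se hcM (islinB lg lg') (islinB lu' lu)) => p.
    have := congr1 (fun F => F p) E; rewrite /= => /rearr2 e'.
    by rewrite /= linearB /= e'.
  have -> : gam = gam' + (w \o d0).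
    apply/funext => p; rewrite addrfctE /=; move: (ew p).
    by rewrite addrfctE opprfctE /= => <-; rewrite addrC subrK.
  by rewrite (addD_all PsaB) PsaZ // addr0.
have sg : subgrp S'.
  split.
    exists 0, 0; split; [exact: islin0 | exact: islin0 |].
    by apply/funext => p; rewrite addrfctE /= linear0 addr0.
  move=> F1 F2 [g1 [u1 [l1 m1 ->]]] [g2 [u2 [l2 m2 ->]]].
  exists (g1 - g2), (u1 - u2); split; [exact: islinB | exact: islinB |].
  by apply/funext => p; rewrite !addrfctE !opprfctE /= linearB /= opprD addrACA.
have ad : addon S' phi.
  move=> F1 F2 [g1 [u1 [l1 m1 ->]]] [g2 [u2 [l2 m2 ->]]].
  have -> : (f \o g1 + (u1 \o d0)) - (f \o g2 + (u2 \o d0)) = f \o (g1 - g2) + ((u1 - u2) \o d0).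
    by apply/funext => p; rewrite !addrfctE !opprfctE /= linearB /= opprD addrACA.
  by rewrite !phiE //; exact: islinB.
have [Psi [PsiB PsiE]] := inj_ext sg ad.
have PsiV : forall y a, islin y -> Psi (sm0 y a \o d0) = 0.
  move=> y a ly.
  have -> : sm0 y a \o d0 = f \o (0 : P1 -> A) + (sm0 y a \o d0).
    by apply/funext => p; rewrite addrfctE /= linear0 add0r.
  rewrite PsiE; first by rewrite phiE ?Psa0 //; [exact: islin0 | exact: islin_sm0].
  by exists 0, (sm0 y a); split => //; [exact: islin0 | exact: islin_sm0].
exists (mklin (bmap_lin PsiB PsiV)) => a; apply: Iext => x; rewrite mklinE.
have [lx|nx] := pselect (islin x); last by rewrite /= /bfun (asboolF nx) Inonlin.
rewrite bmapE //.
have -> : sm x (f a) = f \o (sm x a) + ((0 : P0 -> B) \o d0).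
  by apply/funext => p; rewrite addrfctE /= /sm linearZ addr0.
rewrite PsiE; last by exists (sm x a), 0; split => //; [exact: islin_sm | exact: islin0].
rewrite phiE; [|exact: islin_sm | exact: islin0].
rewrite /Psa /sm.
under eq_bigr => i _ do rewrite linearZ (IZE _ _ (hxs i)).
by rewrite -Ilin_sum ?(sum_smE lx) // => i; apply: islin_scl.
Qed.

Hypothesis pr0 : projective P0.

Lemma lift (A B C : lmodType R) (f : {linear A -> B}) (g : {linear B -> C}) :
  short_exact f g -> (forall I : lmodType R, n_injective n I -> hom_contra_exact I f g) ->
  forall h : {linear M -> C}, exists h' : {linear M -> B}, forall x, g (h' x) = h x.
Proof.
move=> se H3 h; have [fi gf ex gs] := se.
have [u hu] := pr0 gs (mklin (islin_comp (linP h) (linP eps))).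
have gud : forall p, g ((u \o d0) p) = 0 by move=> p; rewrite /= hu /= ed0 linear0.
have [v [lv fv]] := factor_inj se (islin_comp (linP u) (linP d0)) gud.
pose S0 := fun F : P1 -> A => exists w, islin w /\ F = w \o d0.
have sg0 : subgrp S0.
  split; first by exists 0; split; [exact: islin0 | apply/funext => p].
  move=> F1 F2 [w1 [l1 ->]] [w2 [l2 ->]]; exists (w1 - w2); split; first exact: islinB.
  by apply/funext => p; rewrite !addrfctE !opprfctE.
have [w [lw ew]] : S0 v.
  apply: contrapT => nS.
  have [psi [psiB psi0 psiv]] := cogen sg0 nS.
  have psiV : forall y a, islin y -> psi (sm0 y a \o d0) = 0.
    by move=> y a ly; apply: psi0; exists (sm0 y a); split => //; exact: islin_sm0.
  pose al := mklin (bmap_lin psiB psiV).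
  have [_ _ _ c4] := H3 _ I_ninj.
  have [be hbe] := c4 al.
  have psi00 : psi 0 = 0 by rewrite -(subrr 0) psiB subrr.
  have e1 : Phi (al \o v) = psi v.
    have alE : forall a x, islin x -> al a x = psi (sm x a).
      by move=> a x lx; rewrite /al mklinE bmapE.
    have -> : Phi (al \o v) = \sum_(i < k1) al (v (ps i)) (xs i) by [].
    under eq_bigr => i _ do rewrite (alE _ _ (hxs i)).
    rewrite -(big_morph psi (addD_all psiB) psi00); congr psi.
    apply/funext => p; rewrite fct_sumE [in RHS](hps p) islin_sum_eval //.
  have e2 : Phi (al \o v) = 0.
    have -> : al \o v = (be \o u) \o d0.
      by apply/funext => p; rewrite /comp -hbe fv.
    exact: PhiZ (islin_comp (linP be) (linP u)).
  by move: psiv; rewrite -e1 e2 eqxx.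
have lu' : islin (fun p => u p - f (w p)) by apply: islinB (linP u) (islin_comp (linP f) lw).
have hk0 : forall p1, (fun p => u p - f (w p)) (d0 p1) = 0.
  move=> p1 /=; have := congr1 (fun F => F p1) ew => /= <-.
  by rewrite fv subrr.
have [k [lk hk]] := FE lu' hk0.
exists (mklin lk) => m; have [p <-] := eps_surj m.
by rewrite mklinE hk linearB /= hu gf subr0.
Qed.
End IMod.

Lemma lift0 (R : pzRingType) (M P0 : lmodType R) (eps : {linear P0 -> M}) :
  (forall m, exists x, eps x = m) -> (forall x, eps x = 0 -> x = 0) -> projective P0 ->
  forall (A B C : lmodType R) (f : {linear A -> B}) (g : {linear B -> C}),
  short_exact f g ->
  forall h : {linear M -> C}, exists h' : {linear M -> B}, forall x, g (h' x) = h x.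
Proof.
move=> es ei pr A B C f g se h; have [fi gf ex gs] := se.
have [u hu] := pr _ _ _ gs (mklin (islin_comp (linP h) (linP eps))).
have ku : forall x, eps x = 0 -> u x = 0 by move=> x /ei ->; rewrite linear0.
have [k [lk hk]] := factor_surj (linP eps) (linP u) es ku.
exists (mklin lk) => m; have [p <-] := es m.
by rewrite mklinE hk hu.
Qed.

Unset Implicit Arguments.
Theorem proposition3p6 (R : pzRingType) (n : option nat) (A B C : lmodType R)
  (f : {linear A -> B}) (g : {linear B -> C}) :
  short_exact f g ->
  (n_exact n f g <-> (forall P : lmodType R, n_projective n P -> hom_cov_exact P f g)) /\
  ((forall a b : R, a * b = b * a) ->
   (n_exact n f g <-> (forall I : lmodType R, n_injective n I -> hom_contra_exact I f g))).
Proof.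
move=> se; split.
  split.
    by move=> nx P hP; apply: hP.
  move=> H2; split => // M Min; apply: H2 => A' B' C' f' g' [_ hc'].
  exact: hc'.
move=> comm; split.
  by move=> nx I hI; apply: hI.
move=> H3; split => // M Min; apply: cov_of_4 => //.
have [j hres] : exists j, fgp_resolution j M.
  by case: n Min H3 => [m [j [_ r]]|[j r]] _; exists j.
case: hres => P [d [eps [hfg hsurj hcomp hex hlast]]].
case: j hfg hcomp hex hlast => [|j] hfg hcomp hex hlast.
  by apply: (lift0 hsurj _ (hfg 0%N (leqnn 0)).2 se) => x /hlast.
have fg0 := hfg 0%N isT; have fg1 := hfg 1%N isT.
have [k1 [xs [ps [hxs hps]]]] := dual_basis fg1.
have [k0 [ys [qs [hys hqs]]]] := dual_basis fg0.
apply: (lift comm hxs hps hys hqs hsurj _ _ Min fg0.2 se H3).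
  by move=> y; exact: (hcomp 0%N isT y).
by move=> x hx; apply: (hex 0%N isT x hx).
Qed.
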